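(* Let $C_p,C_m>0$ and $T_p,T_m\in(0,1)$ with $T_p\ne T_m$, and let $P(k)=C_pT_p^k-C_mT_m^k$ for real $k$. Then $P$ has exactly one point of abscissa intersection $k^{(0)}$, exactly one extremum $k^{(1)}$ and exactly one inflection point $k^{(2)}$, and $k^{(0)}<k^{(1)}<k^{(2)}$. If $T_p>T_m$ (high pair function), the extremum is a maximum, $P$ is monotonically increasing to the left of its maximum and monotonically decreasing to the right of it, $P$ is concave to the left of its inflection point and convex to the right of it, $P(k)>0$ for $k>k^{(0)}$ and $P(k)<0$ for $k<k^{(0)}$, $P(k)\to 0$ from above as $k\to\infty$, and $P(k)\to-\infty$ as $k\to-\infty$. If $T_p<T_m$ (low pair function), the extremum is a minimum, $P$ is monotonically decreasing to the left of its minimum and monotonically increasing to the right of it, $P$ is convex to the left of its inflection point and concave to the right of it, $P(k)<0$ for $k>k^{(0)}$, $P(k)\to 0$ from below as $k\to\infty$, and $P(k)\to+\infty$ as $k\to-\infty$. Moreover, every derivative $P^{(n)}$, $n\ge 1$, has exactly one zero.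
   Context: A pair function is $P(k)=C_pT_p^k-C_mT_m^k$ with $C_p,C_m>0$ and $T_p,T_m\in(0,1)$. It is a high pair function (HPF) if $T_p>T_m$ and a low pair function (LPF) if $T_p<T_m$. *)

(* Defs.v *)
From Stdlib Require Import Reals.
From Coquelicot Require Import Coquelicot.
Open Scope R_scope.

Definition pair_fun (Cp Cm Tp Tm : R) (k : R) : R :=
  Cp * Rpower Tp k - Cm * Rpower Tm k.

Definition strictly_increasing_on (f : R -> R) (I : R -> Prop) : Prop :=
  forall x y, I x -> I y -> x < y -> f x < f y.
Definition strictly_decreasing_on (f : R -> R) (I : R -> Prop) : Prop :=
  forall x y, I x -> I y -> x < y -> f y < f x.

Definition strictly_convex_on (f : R -> R) (I : R -> Prop) : Prop :=
  forall x y t, I x -> I y -> x <> y -> 0 < t < 1 ->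
    f (t * x + (1 - t) * y) < t * f x + (1 - t) * f y.
Definition strictly_concave_on (f : R -> R) (I : R -> Prop) : Prop :=
  forall x y t, I x -> I y -> x <> y -> 0 < t < 1 ->
    t * f x + (1 - t) * f y < f (t * x + (1 - t) * y).

Definition is_local_max (f : R -> R) (k : R) : Prop :=
  exists eps, 0 < eps /\ forall y, Rabs (y - k) < eps -> f y <= f k.
Definition is_local_min (f : R -> R) (k : R) : Prop :=
  exists eps, 0 < eps /\ forall y, Rabs (y - k) < eps -> f k <= f y.
Definition is_local_extremum (f : R -> R) (k : R) : Prop :=
  is_local_max f k \/ is_local_min f k.

Definition is_inflection_point (f : R -> R) (k : R) : Prop :=
  exists eps, 0 < eps /\
    ((strictly_convex_on f (fun x => k - eps < x <= k) /\
      strictly_concave_on f (fun x => k <= x < k + eps)) \/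
     (strictly_concave_on f (fun x => k - eps < x <= k) /\
      strictly_convex_on f (fun x => k <= x < k + eps))).

(* Main.v *)
Require Import Defs.
From Stdlib Require Import Reals Lra FunctionalExtensionality.
From Coquelicot Require Import Coquelicot.
Open Scope R_scope.

Definition Fn (Cp Cm la lb : R) (n : nat) (k : R) : R :=
  Cp * la ^ n * exp (k * la) - Cm * lb ^ n * exp (k * lb).

Definition rn (Cp Cm la lb : R) (n : nat) : R := Cm / Cp * (lb / la) ^ n.
Definition zn (Cp Cm la lb : R) (n : nat) : R := ln (rn Cp Cm la lb n) / (la - lb).

Lemma Fn_der Cp Cm la lb n k :
  is_derive (Fn Cp Cm la lb n) k (Fn Cp Cm la lb (S n) k).
Proof.
  unfold Fn. auto_derive; auto. simpl. ring.
Qed.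

Lemma ratio_pos la lb : la < 0 -> lb < 0 -> 0 < lb / la.
Proof. intros. unfold Rdiv. assert (/la < 0) by (apply Rinv_lt_0_compat; auto). nra. Qed.

Lemma rn_pos Cp Cm la lb n : 0 < Cp -> 0 < Cm -> la < 0 -> lb < 0 -> 0 < rn Cp Cm la lb n.
Proof.
  intros. unfold rn. apply Rmult_lt_0_compat.
  apply Rdiv_lt_0_compat; auto.
  apply pow_lt. apply ratio_pos; auto.
Qed.

Lemma Fn_eq Cp Cm la lb n k : 0 < Cp -> 0 < Cm -> la < 0 -> lb < 0 -> la <> lb ->
  Fn Cp Cm la lb n k = Cp * la ^ n * exp (k * lb) *
     (exp (k * (la - lb)) - exp (zn Cp Cm la lb n * (la - lb))).
Proof.
  intros. unfold zn.
  replace (ln (rn Cp Cm la lb n) / (la - lb) * (la - lb)) with (ln (rn Cp Cm la lb n))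
    by (field; lra).
  rewrite exp_ln by (apply rn_pos; auto).
  unfold Fn, rn.
  replace (k * la) with (k * lb + k * (la - lb)) by ring. rewrite exp_plus.
  assert (Hp : la ^ n * (lb / la) ^ n = lb ^ n)
    by (rewrite <- Rpow_mult_distr; f_equal; field; lra).
  replace (Cm / Cp * (lb / la) ^ n) with (Cm / Cp * (lb / la) ^ n) by reflexivity.
  transitivity (Cp * la ^ n * (exp (k * lb) * exp (k * (la - lb))) - Cm / Cp * (la ^ n * (lb / la) ^ n) * Cp * exp (k * lb)).
  rewrite Hp. field. lra. field. lra.
Qed.


Lemma Fn_zero Cp Cm la lb n k : 0 < Cp -> 0 < Cm -> la < 0 -> lb < 0 -> la <> lb ->
  Fn Cp Cm la lb n k = 0 <-> k = zn Cp Cm la lb n.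
Proof.
  intros. rewrite Fn_eq by auto. split.
  - intros H4. apply Rmult_integral in H4. destruct H4 as [H4|H4].
    + exfalso. assert (la ^ n <> 0) by (apply pow_nonzero; lra).
      assert (0 < exp (k * lb)) by apply exp_pos.
      apply Rmult_integral in H4; destruct H4 as [H4|H4]; [|lra].
      apply Rmult_integral in H4; destruct H4; lra.
    + assert (exp (k * (la - lb)) = exp (zn Cp Cm la lb n * (la - lb))) by lra.
      apply exp_inv in H5. apply Rmult_eq_reg_r in H5; auto. lra.
  - intros ->. ring.
Qed.

Lemma zn_step Cp Cm la lb n : 0 < Cp -> 0 < Cm -> la < 0 -> lb < 0 ->
  zn Cp Cm la lb (S n) = zn Cp Cm la lb n + ln (lb / la) / (la - lb).
Proof.
  intros. unfold zn.
  replace (rn Cp Cm la lb (S n)) with (rn Cp Cm la lb n * (lb / la)) by (unfold rn; simpl; ring).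
  rewrite ln_mult; [unfold Rdiv; ring | apply rn_pos; auto | apply ratio_pos; auto].
Qed.

Lemma step_pos la lb : la < 0 -> lb < 0 -> la <> lb -> 0 < ln (lb / la) / (la - lb).
Proof.
  intros. destruct (Rtotal_order la lb) as [H2|[H2|H2]]; [|lra|].
  - assert (lb / la < 1).
    { apply (Rmult_lt_reg_r (- la)); [lra|]. unfold Rdiv. 
      replace (lb * / la * - la) with (- lb) by (field; lra). lra. }
    assert (ln (lb / la) < 0).
    { rewrite <- ln_1. apply ln_increasing; auto. apply ratio_pos; auto. }
    replace (ln (lb / la) / (la - lb)) with ((- ln (lb / la)) / (lb - la)) by (field; lra).
    apply Rdiv_lt_0_compat; lra.
  - assert (1 < lb / la).
    { apply (Rmult_lt_reg_r (- la)); [lra|]. unfold Rdiv. 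
      replace (lb * / la * - la) with (- lb) by (field; lra). lra. }
    assert (0 < ln (lb / la)).
    { rewrite <- ln_1. apply ln_increasing; auto. lra. }
    apply Rdiv_lt_0_compat; lra.
Qed.

Lemma Derive_n_Fn Cp Cm la lb n k :
  Derive_n (Fn Cp Cm la lb 0) n k = Fn Cp Cm la lb n k.
Proof.
  revert k. induction n; intros k; simpl; [reflexivity|].
  rewrite (Derive_ext _ (Fn Cp Cm la lb n)) by auto.
  apply is_derive_unique. apply Fn_der.
Qed.

Lemma Fn_swap Cp Cm la lb n k : Fn Cm Cp lb la n k = - Fn Cp Cm la lb n k.
Proof. unfold Fn; ring. Qed.

Lemma zn_swap Cp Cm la lb n : 0 < Cp -> 0 < Cm -> la < 0 -> lb < 0 -> la <> lb ->
  zn Cm Cp lb la n = zn Cp Cm la lb n.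
Proof.
  intros. unfold zn.
  replace (rn Cm Cp lb la n) with (/ rn Cp Cm la lb n).
  - rewrite ln_Rinv by (apply rn_pos; auto). field. lra.
  - assert (rn Cm Cp lb la n * rn Cp Cm la lb n = 1).
    { unfold rn.
      transitivity (Cp / Cm * (Cm / Cp) * ((la / lb) * (lb / la)) ^ n).
      rewrite Rpow_mult_distr. ring.
      replace (la / lb * (lb / la)) with 1 by (field; lra). rewrite pow1. field; lra. }
    assert (0 < rn Cp Cm la lb n) by (apply rn_pos; auto).
    apply (Rmult_eq_reg_r (rn Cp Cm la lb n)); [|lra]. rewrite H4. field. lra.
Qed.

Lemma incr_of_der f df (I : R -> Prop) : (forall x, is_derive f x (df x)) ->
  (forall x y c, I x -> I y -> x < c < y -> 0 < df c) -> strictly_increasing_on f I.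
Proof.
  intros Hd Hp x y Ix Iy Hxy.
  destruct (MVT_cor2 f df x y Hxy) as [c [Hc1 Hc2]].
  intros; apply is_derive_Reals; auto.
  specialize (Hp x y c Ix Iy Hc2). nra.
Qed.

Lemma decr_of_der f df (I : R -> Prop) : (forall x, is_derive f x (df x)) ->
  (forall x y c, I x -> I y -> x < c < y -> df c < 0) -> strictly_decreasing_on f I.
Proof.
  intros Hd Hp x y Ix Iy Hxy.
  destruct (MVT_cor2 f df x y Hxy) as [c [Hc1 Hc2]].
  intros; apply is_derive_Reals; auto.
  specialize (Hp x y c Ix Iy Hc2). nra.
Qed.

Lemma convex_of_der f df (I : R -> Prop) : (forall x, is_derive f x (df x)) ->
  (forall x y c1 c2, I x -> I y -> x < c1 -> c1 < c2 -> c2 < y -> df c1 < df c2) ->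
  strictly_convex_on f I.
Proof.
  intros Hd Hm.
  assert (key : forall x y t, I x -> I y -> x < y -> 0 < t < 1 ->
    f (t * x + (1 - t) * y) < t * f x + (1 - t) * f y).
  { intros x y t Ix Iy Hxy Ht.
    set (z := t * x + (1 - t) * y).
    assert (Ez1' : z - x = (1 - t) * (y - x)) by (unfold z; ring).
    assert (Ez2' : y - z = t * (y - x)) by (unfold z; ring).
    assert (0 < (1 - t) * (y - x)) by (apply Rmult_lt_0_compat; lra).
    assert (0 < t * (y - x)) by (apply Rmult_lt_0_compat; lra).
    assert (Hz1 : x < z) by lra.
    assert (Hz2 : z < y) by lra.
    destruct (MVT_cor2 f df x z Hz1) as [c1 [E1 Hc1]].
    intros; apply is_derive_Reals; auto.
    destruct (MVT_cor2 f df z y Hz2) as [c2 [E2 Hc2]].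
    intros; apply is_derive_Reals; auto.
    assert (Hlt : df c1 < df c2) by (apply (Hm x y); auto; lra).
    assert (Ez1 : z - x = (1 - t) * (y - x)) by (unfold z; ring).
    assert (Ez2 : y - z = t * (y - x)) by (unfold z; ring).
    rewrite Ez1 in E1. rewrite Ez2 in E2.
    assert (0 < t * (1 - t) * (y - x) * (df c2 - df c1)).
    { apply Rmult_lt_0_compat; [|lra]. apply Rmult_lt_0_compat; [|lra]. nra. }
    assert (Fx : f x = f z - df c1 * ((1 - t) * (y - x))) by lra.
    assert (Fy : f y = f z + df c2 * (t * (y - x))) by lra.
    rewrite Fx, Fy. nra. }
  intros x y t Ix Iy Hxy Ht.
  destruct (Rtotal_order x y) as [H|[H|H]]; [auto|lra|].
  replace (t * x + (1 - t) * y) with ((1 - t) * y + (1 - (1 - t)) * x) by ring.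
  replace (t * f x + (1 - t) * f y) with ((1 - t) * f y + (1 - (1 - t)) * f x) by ring.
  apply key; auto; lra.
Qed.

Lemma concave_of_der f df (I : R -> Prop) : (forall x, is_derive f x (df x)) ->
  (forall x y c1 c2, I x -> I y -> x < c1 -> c1 < c2 -> c2 < y -> df c2 < df c1) ->
  strictly_concave_on f I.
Proof.
  intros Hd Hm.
  assert (key : forall x y t, I x -> I y -> x < y -> 0 < t < 1 ->
    t * f x + (1 - t) * f y < f (t * x + (1 - t) * y)).
  { intros x y t Ix Iy Hxy Ht.
    set (z := t * x + (1 - t) * y).
    assert (Ez1' : z - x = (1 - t) * (y - x)) by (unfold z; ring).
    assert (Ez2' : y - z = t * (y - x)) by (unfold z; ring).
    assert (0 < (1 - t) * (y - x)) by (apply Rmult_lt_0_compat; lra).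
    assert (0 < t * (y - x)) by (apply Rmult_lt_0_compat; lra).
    assert (Hz1 : x < z) by lra.
    assert (Hz2 : z < y) by lra.
    destruct (MVT_cor2 f df x z Hz1) as [c1 [E1 Hc1]].
    intros; apply is_derive_Reals; auto.
    destruct (MVT_cor2 f df z y Hz2) as [c2 [E2 Hc2]].
    intros; apply is_derive_Reals; auto.
    assert (Hlt : df c2 < df c1) by (apply (Hm x y); auto; lra).
    assert (Ez1 : z - x = (1 - t) * (y - x)) by (unfold z; ring).
    assert (Ez2 : y - z = t * (y - x)) by (unfold z; ring).
    rewrite Ez1 in E1. rewrite Ez2 in E2.
    assert (0 < t * (1 - t) * (y - x) * (df c1 - df c2)).
    { apply Rmult_lt_0_compat; [|lra]. apply Rmult_lt_0_compat; [|lra]. nra. }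
    assert (Fx : f x = f z - df c1 * ((1 - t) * (y - x))) by lra.
    assert (Fy : f y = f z + df c2 * (t * (y - x))) by lra.
    rewrite Fx, Fy. nra. }
  intros x y t Ix Iy Hxy Ht.
  destruct (Rtotal_order x y) as [H|[H|H]]; [auto|lra|].
  replace (t * x + (1 - t) * y) with ((1 - t) * y + (1 - (1 - t)) * x) by ring.
  replace (t * f x + (1 - t) * f y) with ((1 - t) * f y + (1 - (1 - t)) * f x) by ring.
  apply key; auto; lra.
Qed.

Lemma ext_char f c :
  strictly_increasing_on f (fun k => k <= c) ->
  strictly_decreasing_on f (fun k => c <= k) ->
  is_local_max f c /\ (forall k, is_local_extremum f k <-> k = c).
Proof.
  intros H1 H2.
  assert (Hm : is_local_max f c).
  { exists 1. split; [lra|]. intros y _.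
    destruct (Rtotal_order y c) as [H|[H|H]].
    - left. apply H1; lra.
    - subst; lra.
    - left. apply H2; lra. }
  split; auto. intros k; split; [|intros ->; left; auto].
  intros [[eps [He Hk]]|[eps [He Hk]]];
  destruct (Rtotal_order k c) as [H|[H|H]]; auto; exfalso.
  - set (d := Rmin eps (c - k) / 2).
    assert (d < eps /\ d < c - k /\ 0 < d) by (unfold d, Rmin; destruct Rle_dec; lra).
    specialize (Hk (k + d)). assert (f k < f (k + d)) by (apply H1; lra).
    assert (f (k + d) <= f k) by (apply Hk; rewrite Rabs_right; lra). lra.
  - set (d := Rmin eps (k - c) / 2).
    assert (d < eps /\ d < k - c /\ 0 < d) by (unfold d, Rmin; destruct Rle_dec; lra).
    assert (f k < f (k - d)) by (apply H2; lra).
    assert (f (k - d) <= f k) by (apply Hk; rewrite Rabs_left; lra). lra.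
  - set (d := eps / 2).
    assert (f (k - d) < f k) by (apply H1; unfold d; lra).
    assert (f k <= f (k - d)) by (apply Hk; rewrite Rabs_left; unfold d; lra). lra.
  - set (d := eps / 2).
    assert (f (k + d) < f k) by (apply H2; unfold d; lra).
    assert (f k <= f (k + d)) by (apply Hk; rewrite Rabs_right; unfold d; lra). lra.
Qed.

Lemma cc_contra f (S T : R -> Prop) x y : strictly_convex_on f S -> strictly_concave_on f T ->
  S x -> S y -> T x -> T y -> x <> y -> False.
Proof.
  intros H1 H2 Sx Sy Tx Ty Hxy.
  assert (0 < /2 < 1) by lra.
  specialize (H1 x y (/2) Sx Sy Hxy H). specialize (H2 x y (/2) Tx Ty Hxy H). lra.
Qed.

Lemma infl_char f c :
  strictly_convex_on f (fun k => k <= c) ->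
  strictly_concave_on f (fun k => c <= k) ->
  forall k, is_inflection_point f k <-> k = c.
Proof.
  intros H1 H2 k. split.
  - intros [eps [He [[A B]|[A B]]]];
    destruct (Rtotal_order k c) as [H|[H|H]]; auto; exfalso.
    + set (d := Rmin eps (c - k) / 2).
      assert (d < eps /\ d < c - k /\ 0 < d) by (unfold d, Rmin; destruct Rle_dec; lra).
      apply (cc_contra f _ _ k (k + d) H1 B); simpl; lra.
    + set (d := Rmin eps (k - c) / 2).
      assert (d < eps /\ d < k - c /\ 0 < d) by (unfold d, Rmin; destruct Rle_dec; lra).
      apply (cc_contra f _ _ (k - d) k A H2); simpl; lra.
    + set (d := Rmin eps (c - k) / 2).
      assert (d < eps /\ d < c - k /\ 0 < d) by (unfold d, Rmin; destruct Rle_dec; lra).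
      apply (cc_contra f _ _ (k - d) k H1 A); simpl; lra.
    + set (d := Rmin eps (k - c) / 2).
      assert (d < eps /\ d < k - c /\ 0 < d) by (unfold d, Rmin; destruct Rle_dec; lra).
      apply (cc_contra f _ _ k (k + d) B H2); simpl; lra.
  - intros ->. exists 1. split; [lra|]. left. split.
    + intros x y t Hx Hy; apply H1; simpl in *; lra.
    + intros x y t Hx Hy; apply H2; simpl in *; lra.
Qed.

Lemma neg_decr f (I : R -> Prop) : strictly_decreasing_on f I -> strictly_increasing_on (fun x => - f x) I.
Proof. intros H x y Hx Hy Hxy. specialize (H x y Hx Hy Hxy). lra. Qed.
Lemma neg_incr f (I : R -> Prop) : strictly_increasing_on f I -> strictly_decreasing_on (fun x => - f x) I.
Proof. intros H x y Hx Hy Hxy. specialize (H x y Hx Hy Hxy). lra. Qed.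
Lemma convex_neg_iff f (I : R -> Prop) : strictly_convex_on (fun x => - f x) I <-> strictly_concave_on f I.
Proof. split; intros H x y t Hx Hy Hxy Ht; specialize (H x y t Hx Hy Hxy Ht); lra. Qed.
Lemma concave_neg_iff f (I : R -> Prop) : strictly_concave_on (fun x => - f x) I <-> strictly_convex_on f I.
Proof. split; intros H x y t Hx Hy Hxy Ht; specialize (H x y t Hx Hy Hxy Ht); lra. Qed.
Lemma max_neg f k : is_local_max (fun x => - f x) k -> is_local_min f k.
Proof. intros [e [He H]]. exists e. split; auto. intros y Hy. specialize (H y Hy). lra. Qed.
Lemma min_neg f k : is_local_min (fun x => - f x) k -> is_local_max f k.
Proof. intros [e [He H]]. exists e. split; auto. intros y Hy. specialize (H y Hy). lra. Qed.
Lemma ext_neg f k : is_local_extremum (fun x => - f x) k <-> is_local_extremum f k.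
Proof.
  split; intros [H|H].
  - right; apply max_neg; auto.
  - left; apply min_neg; auto.
  - right. apply max_neg. destruct H as [e [He H]]. exists e; split; auto.
    intros y Hy; specialize (H y Hy); lra.
  - left. apply min_neg. destruct H as [e [He H]]. exists e; split; auto.
    intros y Hy; specialize (H y Hy); lra.
Qed.
Lemma infl_neg f k : is_inflection_point (fun x => - f x) k <-> is_inflection_point f k.
Proof.
  split; intros [e [He [[A B]|[A B]]]]; exists e; split; auto.
  - right. split; [apply convex_neg_iff|apply concave_neg_iff]; auto.
  - left. split; [apply concave_neg_iff|apply convex_neg_iff]; auto.
  - right. split; [apply concave_neg_iff|apply convex_neg_iff];
    [intros x y t Hx Hy Hxy Ht; specialize (A x y t Hx Hy Hxy Ht)
    |intros x y t Hx Hy Hxy Ht; specialize (B x y t Hx Hy Hxy Ht)]; lra.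
  - left. split; [apply convex_neg_iff|apply concave_neg_iff];
    [intros x y t Hx Hy Hxy Ht; specialize (A x y t Hx Hy Hxy Ht)
    |intros x y t Hx Hy Hxy Ht; specialize (B x y t Hx Hy Hxy Ht)]; lra.
Qed.

Lemma dsign_pos d k z : (0 < d /\ z < k) \/ (d < 0 /\ k < z) -> 0 < exp (k * d) - exp (z * d).
Proof. intros [[H1 H2]|[H1 H2]]; assert (z * d < k * d) by nra; pose proof (exp_increasing _ _ H); lra. Qed.
Lemma dsign_neg d k z : (0 < d /\ k < z) \/ (d < 0 /\ z < k) -> exp (k * d) - exp (z * d) < 0.
Proof. intros [[H1 H2]|[H1 H2]]; assert (k * d < z * d) by nra; pose proof (exp_increasing _ _ H); lra. Qed.


Lemma hpf Cp Cm la lb : 0 < Cp -> 0 < Cm -> lb < la -> la < 0 ->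
  let f := Fn Cp Cm la lb 0 in let z := zn Cp Cm la lb in
  is_local_max f (z 1%nat) /\ (forall k, is_local_extremum f k <-> k = z 1%nat) /\
  (forall k, is_inflection_point f k <-> k = z 2%nat) /\
  strictly_increasing_on f (fun k => k <= z 1%nat) /\
  strictly_decreasing_on f (fun k => z 1%nat <= k) /\
  strictly_concave_on f (fun k => k <= z 2%nat) /\
  strictly_convex_on f (fun k => z 2%nat <= k) /\
  (forall k, z 0%nat < k -> 0 < f k) /\
  (forall k, k < z 0%nat -> f k < 0) /\
  filterlim f (Rbar_locally p_infty) (at_right 0) /\
  is_lim f m_infty m_infty.
Proof.
  intros HCp HCm Hab Ha f z.
  assert (Hb : lb < 0) by lra. assert (Hne : la <> lb) by lra.
  assert (Hd : 0 < la - lb) by lra.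
  assert (E : forall n k, Fn Cp Cm la lb n k = Cp * la ^ n * exp (k * lb) *
     (exp (k * (la - lb)) - exp (z n * (la - lb)))) by (intros; apply Fn_eq; auto).
  assert (Hex : forall k, 0 < exp (k * lb)) by (intros; apply exp_pos).
  assert (F1p : forall k, k < z 1%nat -> 0 < Fn Cp Cm la lb 1 k).
  { intros k Hk. rewrite E. simpl. specialize (Hex k).
    assert (exp (k * (la - lb)) - exp (z 1%nat * (la - lb)) < 0) by (apply dsign_neg; auto).
    assert (Cp * (la * 1) * exp (k * lb) < 0).
    { replace (Cp * (la * 1) * exp (k * lb)) with (- (Cp * (- la) * exp (k * lb))) by ring.
      assert (0 < Cp * (- la) * exp (k * lb)) by (apply Rmult_lt_0_compat; [apply Rmult_lt_0_compat|]; lra). lra. }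
    nra. }
  assert (F1n : forall k, z 1%nat < k -> Fn Cp Cm la lb 1 k < 0).
  { intros k Hk. rewrite E. simpl. specialize (Hex k).
    assert (0 < exp (k * (la - lb)) - exp (z 1%nat * (la - lb))) by (apply dsign_pos; auto).
    assert (Cp * (la * 1) * exp (k * lb) < 0).
    { replace (Cp * (la * 1) * exp (k * lb)) with (- (Cp * (- la) * exp (k * lb))) by ring.
      assert (0 < Cp * (- la) * exp (k * lb)) by (apply Rmult_lt_0_compat; [apply Rmult_lt_0_compat|]; lra). lra. }
    nra. }
  assert (Hsq : 0 < la * (la * 1)) by nra.
  assert (F2p : forall k, z 2%nat < k -> 0 < Fn Cp Cm la lb 2 k).
  { intros k Hk. rewrite E. simpl. specialize (Hex k).
    assert (0 < exp (k * (la - lb)) - exp (z 2%nat * (la - lb))) by (apply dsign_pos; auto).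
    apply Rmult_lt_0_compat; auto. apply Rmult_lt_0_compat; auto. apply Rmult_lt_0_compat; auto. }
  assert (F2n : forall k, k < z 2%nat -> Fn Cp Cm la lb 2 k < 0).
  { intros k Hk. rewrite E. simpl. specialize (Hex k).
    assert (exp (k * (la - lb)) - exp (z 2%nat * (la - lb)) < 0) by (apply dsign_neg; auto).
    assert (0 < Cp * (la * (la * 1)) * exp (k * lb)).
    { apply Rmult_lt_0_compat; auto. apply Rmult_lt_0_compat; auto. }
    nra. }
  assert (F0p : forall k, z 0%nat < k -> 0 < f k).
  { intros k Hk. unfold f. rewrite E. simpl. specialize (Hex k).
    assert (0 < exp (k * (la - lb)) - exp (z 0%nat * (la - lb))) by (apply dsign_pos; auto).
    apply Rmult_lt_0_compat; auto. apply Rmult_lt_0_compat; auto. lra. }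
  assert (F0n : forall k, k < z 0%nat -> f k < 0).
  { intros k Hk. unfold f. rewrite E. simpl. specialize (Hex k).
    assert (exp (k * (la - lb)) - exp (z 0%nat * (la - lb)) < 0) by (apply dsign_neg; auto).
    assert (0 < Cp * 1 * exp (k * lb)) by (apply Rmult_lt_0_compat; lra). nra. }
  assert (D0 : forall x, is_derive f x (Fn Cp Cm la lb 1 x)) by (intros; apply Fn_der).
  assert (D1 : forall x, is_derive (Fn Cp Cm la lb 1) x (Fn Cp Cm la lb 2 x)) by (intros; apply Fn_der).
  assert (Inc : strictly_increasing_on f (fun k => k <= z 1%nat)).
  { apply (incr_of_der f _ _ D0). intros x y c Hx Hy Hc. apply F1p. lra. }
  assert (Dec : strictly_decreasing_on f (fun k => z 1%nat <= k)).
  { apply (decr_of_der f _ _ D0). intros x y c Hx Hy Hc. apply F1n. lra. }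
  assert (Cc : strictly_concave_on f (fun k => k <= z 2%nat)).
  { apply (concave_of_der f _ _ D0). intros x y c1 c2 Hx Hy H1 H2 H3.
    apply (decr_of_der _ _ (fun k => k <= z 2%nat) D1); simpl; try lra.
    intros a b c Ha' Hb' Hc. apply F2n. lra. }
  assert (Cv : strictly_convex_on f (fun k => z 2%nat <= k)).
  { apply (convex_of_der f _ _ D0). intros x y c1 c2 Hx Hy H1 H2 H3.
    apply (incr_of_der _ _ (fun k => z 2%nat <= k) D1); simpl; try lra.
    intros a b c Ha' Hb' Hc. apply F2p. lra. }
  destruct (ext_char f (z 1%nat) Inc Dec) as [Hmax Hext].
  assert (Hinf : forall k, is_inflection_point f k <-> k = z 2%nat).
  { intros k. rewrite <- infl_neg. apply infl_char.
    - apply convex_neg_iff; auto.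
    - apply concave_neg_iff; auto. }
  do 9 (split; [auto|]).
  split.
  - unfold filterlim, filter_le, filtermap, at_right, within.
    intros Q [eps Heps]. simpl.
    pose proof (cond_pos eps) as He.
    exists (Rmax (z 0%nat) (ln (eps / Cp) / la)). intros x Hx.
    assert (Hx1 : z 0%nat < x) by (eapply Rle_lt_trans; [apply Rmax_l|eauto]).
    assert (Hx2 : ln (eps / Cp) / la < x) by (eapply Rle_lt_trans; [apply Rmax_r|eauto]).
    assert (x * la < ln (eps / Cp)).
    { replace (ln (eps / Cp)) with (ln (eps / Cp) / la * la) by (field; lra). nra. }
    assert (exp (x * la) < eps / Cp).
    { rewrite <- (exp_ln (eps / Cp)) by (apply Rdiv_lt_0_compat; lra). apply exp_increasing; auto. }
    assert (Hfx : f x = Cp * exp (x * la) - Cm * exp (x * lb)) by (unfold f, Fn; simpl; ring).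
    pose proof (F0p x Hx1). pose proof (Hex x).
    assert (Cp * exp (x * la) < eps).
    { apply (Rmult_lt_compat_l Cp) in H0; auto. replace (Cp * (eps / Cp)) with (pos eps) in H0 by (field; lra). lra. }
    apply Heps; auto. change (Rabs (f x - 0) < eps). rewrite Rabs_right; nra.
  - unfold is_lim, filterlim, filter_le, filtermap.
    intros Q [M HM]. simpl.
    set (L := -2 * M / Cm - 1).
    exists (Rmin (Rmin 0 (ln (Cm / (2 * Cp)) / (la - lb))) (L / lb)). intros x Hx.
    pose proof (Rmin_l (Rmin 0 (ln (Cm / (2 * Cp)) / (la - lb))) (L / lb)).
    pose proof (Rmin_r (Rmin 0 (ln (Cm / (2 * Cp)) / (la - lb))) (L / lb)).
    pose proof (Rmin_l 0 (ln (Cm / (2 * Cp)) / (la - lb))).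
    pose proof (Rmin_r 0 (ln (Cm / (2 * Cp)) / (la - lb))).
    assert (Hx1 : x < 0) by lra.
    assert (Hx2 : x < ln (Cm / (2 * Cp)) / (la - lb)) by lra.
    assert (Hx3 : x < L / lb) by lra.
    assert (x * (la - lb) < ln (Cm / (2 * Cp))).
    { replace (ln (Cm / (2 * Cp))) with (ln (Cm / (2 * Cp)) / (la - lb) * (la - lb)) by (field; lra). nra. }
    assert (Hexp : exp (x * (la - lb)) < Cm / (2 * Cp)).
    { rewrite <- (exp_ln (Cm / (2 * Cp))) by (apply Rdiv_lt_0_compat; lra). apply exp_increasing; auto. }
    assert (Cp * exp (x * (la - lb)) < Cm / 2).
    { apply (Rmult_lt_compat_l Cp) in Hexp; auto. replace (Cp * (Cm / (2 * Cp))) with (Cm / 2) in Hexp by (field; lra). lra. }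
    assert (HxL : L < x * lb).
    { replace L with (L / lb * lb) by (field; lra). nra. }
    assert (Hfx : f x = exp (x * lb) * (Cp * exp (x * (la - lb)) - Cm)).
    { unfold f, Fn. simpl. replace (x * la) with (x * lb + x * (la - lb)) by ring. rewrite exp_plus. ring. }
    assert (Hi : 1 + x * lb < exp (x * lb)) by (apply exp_ineq1; nra).
    assert (0 < x * lb) by nra.
    apply HM. rewrite Hfx.
    assert (exp (x * lb) * (Cp * exp (x * (la - lb)) - Cm) < exp (x * lb) * (- (Cm / 2))).
    { apply Rmult_lt_compat_l; [apply exp_pos|lra]. }
    assert (- (Cm / 2) * exp (x * lb) < - (Cm / 2) * (1 + x * lb)) by nra.
    assert (- (Cm / 2) * (1 + x * lb) < M).
    { unfold L in HxL. assert (-2 * M / Cm = -2 * M * / Cm) by reflexivity.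
      assert (Cm * (-2 * M / Cm) = -2 * M) by (field; lra). nra. }
    lra.
Qed.

Lemma lim_neg_right (f : R -> R) : filterlim f (Rbar_locally p_infty) (at_right 0) ->
  filterlim (fun x => - f x) (Rbar_locally p_infty) (at_left 0).
Proof.
  intros Hf Q [eps Heps].
  apply (Hf (fun y => Q (- y))). exists eps. intros y Hy Hpos. apply Heps; [|lra].
  change (Rabs (- y - 0) < eps). change (Rabs (y - 0) < eps) in Hy.
  replace (- y - 0) with (- (y - 0)) by ring. rewrite Rabs_Ropp. auto.
Qed.

Theorem lemma1 (Cp Cm Tp Tm : R)
  (hCp : 0 < Cp) (hCm : 0 < Cm)
  (hTp : 0 < Tp < 1) (hTm : 0 < Tm < 1) (hne : Tp <> Tm) :
  let P := pair_fun Cp Cm Tp Tm in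
  (exists k0 k1 k2 : R,
     (forall k, P k = 0 <-> k = k0) /\
     (forall k, is_local_extremum P k <-> k = k1) /\
     (forall k, is_inflection_point P k <-> k = k2) /\
     k0 < k1 < k2 /\
     (Tm < Tp ->
        is_local_max P k1 /\
        strictly_increasing_on P (fun k => k <= k1) /\
        strictly_decreasing_on P (fun k => k1 <= k) /\
        strictly_concave_on P (fun k => k <= k2) /\
        strictly_convex_on P (fun k => k2 <= k) /\
        (forall k, k0 < k -> 0 < P k) /\
        (forall k, k < k0 -> P k < 0) /\
        filterlim P (Rbar_locally p_infty) (at_right 0) /\
        is_lim P m_infty m_infty) /\
     (Tp < Tm ->
        is_local_min P k1 /\
        strictly_decreasing_on P (fun k => k <= k1) /\
        strictly_increasing_on P (fun k => k1 <= k) /\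
        strictly_convex_on P (fun k => k <= k2) /\
        strictly_concave_on P (fun k => k2 <= k) /\
        (forall k, k0 < k -> P k < 0) /\
        filterlim P (Rbar_locally p_infty) (at_left 0) /\
        is_lim P m_infty p_infty)) /\
  (forall n : nat, (1 <= n)%nat -> exists! k : R, Derive_n P n k = 0).
Proof.
  intros P.
  assert (Hla : ln Tp < 0) by (rewrite <- ln_1; apply ln_increasing; lra).
  assert (Hlb : ln Tm < 0) by (rewrite <- ln_1; apply ln_increasing; lra).
  assert (Hlne : ln Tp <> ln Tm) by (intro H; apply hne; apply ln_inv; lra).
  assert (HP : P = Fn Cp Cm (ln Tp) (ln Tm) 0).
  { apply functional_extensionality. intros k. unfold P, pair_fun, Rpower, Fn. simpl. ring. }
  assert (HP' : P = fun x => - Fn Cm Cp (ln Tm) (ln Tp) 0 x).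
  { rewrite HP. apply functional_extensionality. intros k. rewrite Fn_swap. ring. }
  clearbody P.
  set (la := ln Tp) in *. set (lb := ln Tm) in *.
  assert (Hsw : forall n, zn Cm Cp lb la n = zn Cp Cm la lb n) by (intros; apply zn_swap; auto).
  assert (Hst : forall n, zn Cp Cm la lb (S n) = zn Cp Cm la lb n + ln (lb / la) / (la - lb))
    by (intros; apply zn_step; auto).
  pose proof (step_pos la lb Hla Hlb Hlne) as Hsp.
  split.
  2:{ intros n _. exists (zn Cp Cm la lb n). split.
      - rewrite HP, Derive_n_Fn. apply Fn_zero; auto.
      - intros k. rewrite HP, Derive_n_Fn. intros H. symmetry. apply Fn_zero; auto. }
  exists (zn Cp Cm la lb 0), (zn Cp Cm la lb 1), (zn Cp Cm la lb 2).
  assert (Hlt : Tm < Tp -> lb < la) by (intros; apply ln_increasing; lra).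
  assert (Hgt : Tp < Tm -> la < lb) by (intros; apply ln_increasing; lra).
  assert (Hcase : lb < la \/ la < lb) by (destruct (Rtotal_order la lb) as [H|[H|H]]; auto; contradiction).
  split; [|split; [|split; [|split; [|split]]]].
  - intros k. rewrite HP. apply Fn_zero; auto.
  - intros k. destruct Hcase as [Hc|Hc].
    + rewrite HP. apply (hpf Cp Cm la lb); auto.
    + rewrite HP', ext_neg, <- Hsw. apply (hpf Cm Cp lb la); auto.
  - intros k. destruct Hcase as [Hc|Hc].
    + rewrite HP. apply (hpf Cp Cm la lb); auto.
    + rewrite HP', infl_neg, <- Hsw. apply (hpf Cm Cp lb la); auto.
  - rewrite (Hst 1%nat), (Hst 0%nat). lra.
  - intros HT. rewrite HP.
    destruct (hpf Cp Cm la lb hCp hCm (Hlt HT) Hla) as (A1 & A2 & A3 & A4 & A5 & A6 & A7 & A8 & A9 & A10 & A11).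
    repeat split; auto.
  - intros HT. rewrite HP'. rewrite <- !Hsw.
    destruct (hpf Cm Cp lb la hCm hCp (Hgt HT) Hlb) as (A1 & A2 & A3 & A4 & A5 & A6 & A7 & A8 & A9 & A10 & A11).
    set (g := Fn Cm Cp lb la 0) in *. set (z := zn Cm Cp lb la) in *.
    split; [|split; [|split; [|split; [|split; [|split; [|split]]]]]].
    + destruct A1 as [e [He H]]. exists e. split; auto. intros y Hy. specialize (H y Hy). lra.
    + apply neg_incr; auto.
    + apply neg_decr; auto.
    + apply convex_neg_iff; auto.
    + apply concave_neg_iff; auto.
    + intros k Hk. specialize (A8 k Hk). lra.
    + apply lim_neg_right; auto.
    + apply (is_lim_opp g m_infty m_infty); auto.
Qed.
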